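(* Let $\theta_1<\theta_2$, $f\in C^2([\theta_1,\theta_2])$, $\gamma>1$, and let $I\subseteq[\theta_1,\theta_2]$ be a closed interval. Suppose that, for positive constants $A$ and $\alpha$ with $\alpha<2\gamma-2$, one of the following holds: $f(s)f''(s)\ge A(s-\theta_1)^\alpha$ for all $s\in I$; or $f(s)f''(s)\ge A(\theta_2-s)^\alpha$ for all $s\in I$. Then there is a constant $C>0$ depending only on $A,\alpha,\theta_1,\theta_2,\gamma$ such that $\int_I|f(s)|^{-1/\gamma}\,ds\le C$. *)

(* Defs.v *)
From HB Require Import structures.
From mathcomp Require Import all_boot all_order all_algebra.
From mathcomp Require Import all_classical all_reals all_analysis.
Set Implicit Arguments. Unset Strict Implicit. Unset Printing Implicit Defensive.
Import Order.TTheory GRing.Theory Num.Theory.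
Import numFieldNormedType.Exports.
Local Open Scope ring_scope.

(* A C^2 function on a
   compact interval [t1,t2] extends to a C^2 function on R, and the statement
   only uses the values of f, f'' on [t1,t2], so quantifying over such f is
   equivalent to quantifying over f in C^2([t1,t2]). *)
Definition C2 (R : realType) (f : R -> R) : Prop :=
  (forall x : R, derivable f x 1) /\
  (forall x : R, derivable (derive1 f) x 1) /\
  continuous (derive1 (derive1 f)).

(* Main.v *)
Require Import Defs.
From HB Require Import structures.
From mathcomp Require Import all_boot all_order all_algebra.
From mathcomp Require Import all_classical all_reals all_analysis.
From mathcomp Require Import ring lra measurable_realfun.
Import Order.TTheory GRing.Theory Num.Theory.
Import numFieldNormedType.Exports.
Local Open Scope classical_set_scope.
Local Open Scope ring_scope.
Section A.
Variable R : realType.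
Variables (h dh ddh : R -> R).
Hypothesis Hh : forall x : R, is_derive x 1 h (dh x).
Hypothesis Hdh : forall x : R, is_derive x 1 dh (ddh x).

Lemma mvt_h u v : u < v -> exists2 c, u < c < v & h v - h u = dh c * (v - u).
Proof.
move=> uv; have [c ci ->] := @MVT R h dh u v uv (fun x _ => Hh x)
  (@derivable_within_continuous R R h `[u, v] (fun x _ => @ex_derive _ _ _ _ _ _ _ (Hh x))).
by exists c => //; move: ci; rewrite in_itv.
Qed.

Lemma mvt_dh u v : u < v -> exists2 c, u < c < v & dh v - dh u = ddh c * (v - u).
Proof.
move=> uv; have [c ci ->] := @MVT R dh ddh u v uv (fun x _ => Hdh x)
  (@derivable_within_continuous R R dh `[u, v] (fun x _ => @ex_derive _ _ _ _ _ _ _ (Hdh x))).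
by exists c => //; move: ci; rewrite in_itv.
Qed.

Arguments mvt_h {u v}.
Arguments mvt_dh {u v}.

Lemma mono_dh u v : u <= v -> (forall x, u <= x <= v -> 0 <= ddh x) -> dh u <= dh v.
Proof.
rewrite le_eqVlt => /orP[/eqP -> //|uv] H.
have [c /andP[uc cv] E] := mvt_dh uv.
have : 0 <= ddh c by apply: H; rewrite !ltW.
have : 0 < v - u by rewrite subr_gt0.
move=> h1 h2; rewrite -subr_ge0 E; exact: mulr_ge0 (ltW h1).
Qed.

Lemma key_fwd p q M : p < q ->
  (forall x, p <= x <= q -> 0 <= ddh x) ->
  (forall x, p + (q-p)/3 <= x <= q - (q-p)/3 -> M <= ddh x) ->
  h p <= h (p + (q-p)/3) -> 0 <= h (q - (q-p)/3) ->
  M * ((q-p)/3) * ((q-p)/3) <= h q.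
Proof.
move=> pq H0 HM hp ht2.
set L3 := (q-p)/3.
have L3p : 0 < L3 by rewrite /L3 divr_gt0 // subr_gt0.
have hL : L3 * 3 = q - p by rewrite /L3 mulfVK // pnatr_eq0.
have t1q : p < p + L3 by lra.
have [x1 /andP[px1 x1t1] E1] := mvt_h t1q.
have dx1 : 0 <= dh x1.
  have : 0 <= dh x1 * (p + L3 - p) by rewrite -E1 subr_ge0.
  by rewrite addrAC subrr add0r pmulr_lge0.
have m1 : dh x1 <= dh (p + L3).
  apply: mono_dh; first exact: ltW.
  by move=> x /andP[a b]; apply: H0; apply/andP; split; lra.
have t12 : p + L3 < q - L3 by lra.
have [z /andP[t1z zt2] E2] := mvt_dh t12.
have Mz : M <= ddh z by apply: HM; apply/andP; split; lra.
have t2q : q - L3 < q by lra.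
have [x2 /andP[t2x2 x2q] E3] := mvt_h t2q.
have m2 : dh (q - L3) <= dh x2.
  apply: mono_dh; first exact: ltW.
  by move=> x /andP[a b]; apply: H0; apply/andP; split; lra.
have e1 : q - L3 - (p + L3) = L3 by lra.
have e2 : q - (q - L3) = L3 by lra.
rewrite e1 in E2; rewrite e2 in E3.
have ML : M * L3 <= dh (q - L3).
  have : M * L3 <= ddh z * L3 by rewrite ler_pM2r.
  rewrite -E2; lra.
have : M * L3 * L3 <= dh x2 * L3 by rewrite ler_pM2r //; lra.
lra.
Qed.

Lemma key_bwd p q M : p < q ->
  (forall x, p <= x <= q -> 0 <= ddh x) ->
  (forall x, p + (q-p)/3 <= x <= q - (q-p)/3 -> M <= ddh x) ->
  h q <= h (q - (q-p)/3) -> 0 <= h (p + (q-p)/3) ->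
  M * ((q-p)/3) * ((q-p)/3) <= h p.
Proof.
move=> pq H0 HM hq ht1.
set L3 := (q-p)/3.
have L3p : 0 < L3 by rewrite /L3 divr_gt0 // subr_gt0.
have hL : L3 * 3 = q - p by rewrite /L3 mulfVK // pnatr_eq0.
have t2q : q - L3 < q by lra.
have [x1 /andP[t2x1 x1q] E1] := mvt_h t2q.
have e2 : q - (q - L3) = L3 by lra.
rewrite e2 in E1.
have dx1 : dh x1 <= 0.
  have : dh x1 * L3 <= 0 by rewrite -E1 subr_le0.
  by rewrite pmulr_lle0.
have m1 : dh (q - L3) <= dh x1.
  apply: mono_dh; first exact: ltW.
  by move=> x /andP[a b]; apply: H0; apply/andP; split; lra.
have t12 : p + L3 < q - L3 by lra.
have [z /andP[t1z zt2] E2] := mvt_dh t12.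
have Mz : M <= ddh z by apply: HM; apply/andP; split; lra.
have t1q : p < p + L3 by lra.
have [x2 /andP[px2 x2t1] E3] := mvt_h t1q.
have m2 : dh x2 <= dh (p + L3).
  apply: mono_dh; first exact: ltW.
  by move=> x /andP[a b]; apply: H0; apply/andP; split; lra.
have e1 : q - L3 - (p + L3) = L3 by lra.
have e3 : p + L3 - p = L3 by lra.
rewrite e1 in E2; rewrite e3 in E3.
have ML : M * L3 <= - dh (p + L3).
  have : M * L3 <= ddh z * L3 by rewrite ler_pM2r.
  rewrite -E2; lra.
have : M * L3 * L3 <= - dh x2 * L3 by rewrite ler_pM2r //; lra.
rewrite mulNr; lra.
Qed.
End A.

Lemma lowerbound (R : realType) (f f1 f2 : R -> R) (A alpha a b : R) :
  (forall x : R, is_derive x 1 f (f1 x)) ->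
  (forall x : R, is_derive x 1 f1 (f2 x)) ->
  0 < A -> 0 < alpha -> a <= b ->
  (forall x, a <= x <= b -> 0 <= f x * f2 x) ->
  (forall x l, a <= x <= b -> 0 <= l -> l <= x - a -> l <= b - x ->
      A * l `^ alpha <= f x * f2 x) ->
  exists2 s0, a <= s0 <= b & forall s, a <= s <= b ->
    2 * A * (`|s - s0| / 3) `^ alpha * (`|s - s0| / 3) * (`|s - s0| / 3) <= f s * f s.
Proof.
move=> Hf Hf1 A0 al0 ab H0 HW.
pose dh x := f x * f1 x + f x * f1 x.
pose ddh x := (f x * f2 x + f1 x * f1 x) + (f x * f2 x + f1 x * f1 x).
have Hh (x : R) : is_derive x 1 (f * f) (dh x).
  apply: (is_derive_eq (is_deriveM (Hf x) (Hf x))).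
  by rewrite /dh.
have Hdh (x : R) : is_derive x 1 dh (ddh x).
  have D := is_deriveD (is_deriveM (Hf x) (Hf1 x)) (is_deriveM (Hf x) (Hf1 x)).
  apply: (is_derive_eq D).
  by rewrite /ddh /GRing.scale /=; lra.
have ch : {within `[a, b], continuous (f * f)}.
  apply: derivable_within_continuous => x _; exact: ex_derive.
have [s0 s0i s0min] := EVT_min ab ch.
exists s0; first by move: s0i; rewrite in_itv.
move: s0i; rewrite in_itv /= => /andP[as0 s0b].
have gen p q : a <= p -> p < q -> q <= b ->
  (forall x, p <= x <= q -> 0 <= ddh x) /\
  (forall x, p + (q-p)/3 <= x <= q - (q-p)/3 -> 2 * A * ((q-p)/3) `^ alpha <= ddh x).
  move=> ap pq qb; split.
    move=> x /andP[px xq]; rewrite /ddh.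
    have : 0 <= f x * f2 x by apply: H0; apply/andP; split; lra.
    have := sqr_ge0 (f1 x); rewrite expr2; lra.
  move=> x /andP[px xq].
  have L3p : 0 < (q - p) / 3 by rewrite divr_gt0 // subr_gt0.
  have : A * ((q - p) / 3) `^ alpha <= f x * f2 x.
    have hL : (q - p) / 3 * 3 = q - p by rewrite mulfVK // pnatr_eq0.
    apply: HW; [apply/andP; split|..]; lra.
  rewrite /ddh; have := sqr_ge0 (f1 x); rewrite expr2; lra.
have hge0 x : 0 <= (f * f) x by rewrite /= -expr2 sqr_ge0.
move=> s /andP[aS sb].
have [s0s|ss0|->] := ltgtP s0 s.
- have [H1 H2] := gen s0 s as0 s0s sb.
  have e : `|s - s0| = s - s0 by rewrite ger0_norm // subr_ge0 ltW.
  rewrite e.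
  have := @key_fwd R _ _ _ Hh Hdh _ _ _ s0s H1 H2.
  rewrite mulrA; apply.
    apply: s0min; rewrite in_itv /=; apply/andP; split.
      have : 0 < (s - s0) / 3 by rewrite divr_gt0 // subr_gt0.
      lra.
    have : 0 < (s - s0) / 3 by rewrite divr_gt0 // subr_gt0.
    have : (s - s0) / 3 * 3 = s - s0 by rewrite mulfVK // pnatr_eq0.
    lra.
  exact: hge0.
- have [H1 H2] := gen s s0 aS ss0 s0b.
  have e : `|s - s0| = s0 - s by rewrite ler0_norm ?opprB // subr_le0 ltW.
  rewrite e.
  have := @key_bwd R _ _ _ Hh Hdh _ _ _ ss0 H1 H2.
  rewrite mulrA; apply.
    apply: s0min; rewrite in_itv /=; apply/andP; split.
      have : 0 < (s0 - s) / 3 by rewrite divr_gt0 // subr_gt0.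
      have : (s0 - s) / 3 * 3 = s0 - s by rewrite mulfVK // pnatr_eq0.
      lra.
    have : 0 < (s0 - s) / 3 by rewrite divr_gt0 // subr_gt0.
    lra.
  exact: hge0.
- rewrite subrr normr0 mul0r mulr0 -expr2; exact: sqr_ge0.
Qed.

Lemma int_up (R : realType) (D : set R) (F : nat -> set R) (g : R -> R) (B : R) :
  measurable D -> (forall n, measurable (F n)) -> nondecreasing_seq F ->
  D `<=` \bigcup_n F n -> measurable_fun setT g -> (forall x, 0 <= g x) ->
  (forall n, (\int[@lebesgue_measure R]_(x in F n) (g x)%:E <= B%:E)%E) ->
  (\int[@lebesgue_measure R]_(x in D) (g x)%:E <= B%:E)%E.
Proof.
move=> mD mF ndF DF mg g0 HB.
have mU : measurable (\bigcup_n F n) by exact: bigcupT_measurable.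
have mgE : measurable_fun setT (EFin \o g) by exact/measurable_EFinP.
apply: (@le_trans _ _ (\int[@lebesgue_measure R]_(x in \bigcup_n F n) (g x)%:E)%E).
  apply: ge0_subset_integral => //.
  - exact: measurable_funS mgE.
  - by move=> x _; rewrite lee_fin.
have cv := @ge0_nondecreasing_set_cvg_integral _ (measurableTypeR R) R F (fun x => (g x)%:E)
  lebesgue_measure ndF mF (fun i => measurable_funS measurableT (@subsetT _ _) mgE)
  (fun i x _ => g0 x).
rewrite -(cvg_lim _ cv) //.
apply: lime_le; first by apply/cvg_ex; eexists; exact: cv.
by apply: nearW => n; exact: HB.
Qed.

Lemma is_derive_powsh (R : realType) (k p c x : R) : c < x ->
  is_derive x 1 (fun y => k * (y - c) `^ p) (k * (p * (x - c) `^ (p - 1))).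
Proof.
move=> cx.
have D1 : is_derive x 1 (fun y : R => y - c) 1.
  have := is_deriveB (is_derive_id x 1) (is_derive_cst c x 1).
  by rewrite subr0.
have P : 0 < x - c by rewrite subr_gt0.
have D2 := is_derive1_comp (f := @powR R ^~ p) (g := fun y => y - c) (is_derive1_powR p P) D1.
have D3 := is_deriveZ k D2.
apply: (is_derive_eq D3).
by rewrite mulr1 /GRing.scale /=.
Qed.

Lemma is_derive_powshN (R : realType) (k p c x : R) : x < c ->
  is_derive x 1 (fun y => k * (c - y) `^ p) (k * (p * (c - x) `^ (p - 1) * (-1))).
Proof.
move=> cx.
have D1 : is_derive x 1 (fun y : R => c - y) (-1).
  have := is_deriveB (is_derive_cst c x 1) (is_derive_id x 1).
  by rewrite sub0r.
have P : 0 < c - x by rewrite subr_gt0.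
have D2 := is_derive1_comp (f := @powR R ^~ p) (g := fun y => c - y) (is_derive1_powR p P) D1.
have D3 := is_deriveZ k D2.
apply: (is_derive_eq D3).
by rewrite /GRing.scale /=.
Qed.

Lemma right_piece (R : realType) (k bt c u b : R) : 0 <= k -> 0 <= bt < 1 -> c < u -> u <= b ->
  (\int[@lebesgue_measure R]_(x in `[u, b]) (k * (x - c) `^ (- bt))%:E
     <= (k / (1 - bt) * (b - c) `^ (1 - bt))%:E)%E.
Proof.
move=> k0 /andP[b0 b1] cu ub.
have kb : 0 <= k / (1 - bt) by rewrite divr_ge0 // subr_ge0 ltW.
have bnd : 0 <= k / (1 - bt) * (b - c) `^ (1 - bt) by rewrite mulr_ge0 // powR_ge0.
move: ub; rewrite le_eqVlt => /orP[/eqP <-|ub].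
  by rewrite set_itv1 integral_set1 lee_fin mulr_ge0 // powR_ge0.
pose G x := k / (1 - bt) * (x - c) `^ (1 - bt).
have dG x : c < x -> is_derive x 1 G (k * (x - c) `^ (- bt)).
  move=> cx; have := @is_derive_powsh R (k / (1 - bt)) (1 - bt) c x cx; move/is_derive_eq; apply.
  have -> : 1 - bt - 1 = - bt by ring.
  by field; rewrite subr_eq0 gt_eqF.
have dg x : c < x -> is_derive x 1 (fun y => k * (y - c) `^ (- bt))
    (k * (- bt * (x - c) `^ (- bt - 1))).
  by move=> cx; exact: is_derive_powsh.
rewrite (@continuous_FTC2 R (fun x => k * (x - c) `^ (- bt)) G u b ub).
- rewrite -EFinD lee_fin /G; have : 0 <= k / (1 - bt) * (u - c) `^ (1 - bt).
    by rewrite mulr_ge0 // powR_ge0.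
  lra.
- apply: derivable_within_continuous => x; rewrite in_itv /= => /andP[ux _].
  apply: ex_derive; apply: dg; exact: lt_le_trans ux.
- split.
  + move=> x; rewrite in_itv /= => /andP[ux _].
    apply: ex_derive; apply: dG; exact: lt_trans ux.
  + apply: cvg_at_right_filter; apply: differentiable_continuous.
    apply/derivable1_diffP; apply: ex_derive; exact: dG.
  + apply: cvg_at_left_filter; apply: differentiable_continuous.
    apply/derivable1_diffP; apply: ex_derive; apply: dG; exact: lt_trans ub.
- move=> x; rewrite in_itv /= => /andP[ux _].
  rewrite derive1E; apply: derive_val; apply: dG; exact: lt_trans ux.
Qed.

Lemma left_piece (R : realType) (k bt c a v : R) : 0 <= k -> 0 <= bt < 1 -> v < c -> a <= v ->
  (\int[@lebesgue_measure R]_(x in `[a, v]) (k * (c - x) `^ (- bt))%:E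
     <= (k / (1 - bt) * (c - a) `^ (1 - bt))%:E)%E.
Proof.
move=> k0 /andP[b0 b1] vc av.
have kb : 0 <= k / (1 - bt) by rewrite divr_ge0 // subr_ge0 ltW.
move: av; rewrite le_eqVlt => /orP[/eqP ->|av].
  by rewrite set_itv1 integral_set1 lee_fin mulr_ge0 // powR_ge0.
pose G x := - (k / (1 - bt)) * (c - x) `^ (1 - bt).
have dG x : x < c -> is_derive x 1 G (k * (c - x) `^ (- bt)).
  move=> cx; have := @is_derive_powshN R (- (k / (1 - bt))) (1 - bt) c x cx.
  move/is_derive_eq; apply.
  have -> : 1 - bt - 1 = - bt by ring.
  by field; rewrite subr_eq0 gt_eqF.
have dg x : x < c -> is_derive x 1 (fun y => k * (c - y) `^ (- bt))
    (k * (- bt * (c - x) `^ (- bt - 1) * (-1))).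
  by move=> cx; exact: is_derive_powshN.
rewrite (@continuous_FTC2 R (fun x => k * (c - x) `^ (- bt)) G a v av).
- rewrite -EFinD lee_fin /G.
  have : 0 <= k / (1 - bt) * (c - v) `^ (1 - bt) by rewrite mulr_ge0 // powR_ge0.
  lra.
- apply: derivable_within_continuous => x; rewrite in_itv /= => /andP[_ xv].
  apply: ex_derive; apply: dg; exact: le_lt_trans vc.
- split.
  + move=> x; rewrite in_itv /= => /andP[_ xv].
    apply: ex_derive; apply: dG; exact: lt_trans vc.
  + apply: cvg_at_right_filter; apply: differentiable_continuous.
    apply/derivable1_diffP; apply: ex_derive; apply: dG; exact: lt_trans vc.
  + apply: cvg_at_left_filter; apply: differentiable_continuous.
    apply/derivable1_diffP; apply: ex_derive; exact: dG.
- move=> x; rewrite in_itv /= => /andP[_ xv].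
  rewrite derive1E; apply: derive_val; apply: dG; exact: lt_trans vc.
Qed.

Lemma right_int (R : realType) (k bt c b : R) : 0 <= k -> 0 <= bt < 1 -> c <= b ->
  (\int[@lebesgue_measure R]_(x in `]c, b]) (k * (x - c) `^ (- bt))%:E
     <= (k / (1 - bt) * (b - c) `^ (1 - bt))%:E)%E.
Proof.
move=> k0 bt01 cb.
have kb : 0 <= k / (1 - bt) by rewrite divr_ge0 // subr_ge0 ltW //; case/andP: bt01.
move: cb; rewrite le_eqVlt => /orP[/eqP <-|cb].
  rewrite (_ : `]c, c]%classic = set0); first by rewrite integral_set0 lee_fin mulr_ge0 // powR_ge0.
  by apply/seteqP; split => x //=; rewrite in_itv /= => /andP[h1 h2]; lra.
apply: (@int_up R _ (fun n => `[c + (b - c) / n.+1%:R, b]%classic)).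
- exact: measurable_itv.
- move=> n; exact: measurable_itv.
- move=> n m nm; rewrite subsetEset => x /=; rewrite !in_itv /= => /andP[h1 ->].
  rewrite andbT; apply: le_trans h1; rewrite lerD2l ler_pM2l ?subr_gt0 //.
  by rewrite lef_pV2 ?posrE ?ltr0n // ler_nat.
- move=> x /=; rewrite in_itv /= => /andP[cx xb].
  have xc : 0 < x - c by rewrite subr_gt0.
  have bc : 0 < b - c by rewrite subr_gt0.
  have bd := archi_boundP (divr_ge0 (ltW bc) (ltW xc)).
  exists (Num.bound ((b - c) / (x - c))) => //=.
  rewrite in_itv /= xb andbT -lerBrDl ler_pdivrMr ?ltr0n //.
  move: bd; rewrite ltr_pdivrMr // => /ltW h; apply: (le_trans h).
  by rewrite mulrC ler_pM2l // ler_nat.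
- apply: measurable_funM; first exact: measurable_cst.
  apply: (measurableT_comp (measurable_powR _)).
  by apply: measurable_funB.
- by move=> x; rewrite mulr_ge0 // powR_ge0.
- move=> n; apply: right_piece => //.
  + rewrite ltrDl divr_gt0 // ?subr_gt0 //.
  + rewrite -lerBrDl ler_pdivrMr ?ltr0n // -{1}(mulr1 (b - c)) ler_pM2l ?subr_gt0 //.
  by rewrite (ler_nat R 1 n.+1).
Qed.

Lemma left_int (R : realType) (k bt c a : R) : 0 <= k -> 0 <= bt < 1 -> a <= c ->
  (\int[@lebesgue_measure R]_(x in `[a, c[) (k * (c - x) `^ (- bt))%:E
     <= (k / (1 - bt) * (c - a) `^ (1 - bt))%:E)%E.
Proof.
move=> k0 bt01 cb.
have kb : 0 <= k / (1 - bt) by rewrite divr_ge0 // subr_ge0 ltW //; case/andP: bt01.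
move: cb; rewrite le_eqVlt => /orP[/eqP <-|cb].
  rewrite (_ : `[a, a[%classic = set0); first by rewrite integral_set0 lee_fin mulr_ge0 // powR_ge0.
  by apply/seteqP; split => x //=; rewrite in_itv /= => /andP[h1 h2]; lra.
have bc : 0 < c - a by rewrite subr_gt0.
apply: (@int_up R _ (fun n => `[a, c - (c - a) / n.+1%:R]%classic)).
- exact: measurable_itv.
- move=> n; exact: measurable_itv.
- move=> n m nm; rewrite subsetEset => x /=; rewrite !in_itv /= => /andP[-> h1] /=.
  apply: le_trans h1 _; rewrite lerD2l lerN2 ler_pM2l //.
  by rewrite lef_pV2 ?posrE ?ltr0n // ler_nat.
- move=> x /=; rewrite in_itv /= => /andP[ax xc].
  have xc' : 0 < c - x by rewrite subr_gt0.
  have bd := archi_boundP (divr_ge0 (ltW bc) (ltW xc')).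
  exists (Num.bound ((c - a) / (c - x))) => //=.
  rewrite in_itv /= ax /= lerBrDr -lerBrDl ler_pdivrMr ?ltr0n //.
  move: bd; rewrite ltr_pdivrMr // => /ltW h; apply: (le_trans h).
  by rewrite mulrC ler_pM2l // ler_nat.
- apply: measurable_funM; first exact: measurable_cst.
  apply: (measurableT_comp (measurable_powR _)).
  by apply: measurable_funB.
- by move=> x; rewrite mulr_ge0 // powR_ge0.
- move=> n; apply: left_piece => //.
  + rewrite ltrBlDr ltrDl divr_gt0 // ?subr_gt0 //.
  + rewrite lerBrDr -lerBrDl ler_pdivrMr ?ltr0n // -{1}(mulr1 (c - a)) ler_pM2l ?subr_gt0 //.
    by rewrite (ler_nat R 1 n.+1).
Qed.

Lemma pointwise (R : realType) (A alpha gamma E y : R) :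
  0 < A -> 0 < alpha -> 0 < gamma -> 0 < y -> 0 <= E ->
  2 * A * y `^ alpha * y * y <= E * E ->
  E `^ (- gamma^-1) <= ((2 * A) `^ (2 * gamma)^-1)^-1 * (y `^ (- ((alpha + 2) * (2 * gamma)^-1))).
Proof.
move=> A0 al0 g0 y0 E0 H.
set r := (2 * gamma)^-1.
have r0 : 0 < r by rewrite /r invr_gt0 mulr_gt0.
have P : 2 * A * y `^ (alpha + 2) <= E `^ 2.
  rewrite powRD; last by apply/implyP => _; rewrite gt_eqF.
  rewrite powR_mulrn; last exact: ltW.
  rewrite powR_mulrn // !expr2 !mulrA; exact: H.
have P' := ge0_ler_powR (ltW r0) _ _ P.
rewrite !nnegrE in P'.
have {P'} P' := P' (mulr_ge0 (mulr_ge0 (ltW (ltr0Sn _ _)) (ltW A0)) (powR_ge0 _ _)) (powR_ge0 _ _).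
rewrite -[(E `^ 2) `^ r]powRrM in P'.
have hA : 0 <= 2 * A by rewrite mulr_ge0 // ltW.
rewrite (powRM _ hA (powR_ge0 _ _)) -powRrM in P'.
have e : 2 * r = gamma^-1 by rewrite /r invfM mulrA mulfV ?mul1r // pnatr_eq0.
rewrite e in P'.
have c0 : 0 < (2 * A) `^ r by rewrite powR_gt0 // mulr_gt0.
have y1 : 0 < y `^ ((alpha + 2) * r) by rewrite powR_gt0.
rewrite powRN powRN -invfM.
rewrite lef_pV2 ?posrE ?mulr_gt0 //.
  apply: lt_le_trans P'; exact: mulr_gt0.
Qed.

Theorem lemma3p6 (R : realType) (theta1 theta2 gamma A alpha : R) :
  theta1 < theta2 -> 1 < gamma -> 0 < A -> 0 < alpha ->
  alpha < 2 * gamma - 2 ->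
  exists C : R, 0 < C /\
    forall (f : R -> R) (a b : R),
      C2 f -> theta1 <= a -> a <= b -> b <= theta2 ->
      ((forall s, a <= s <= b ->
          A * (s - theta1) `^ alpha <= f s * derive1 (derive1 f) s) \/
       (forall s, a <= s <= b ->
          A * (theta2 - s) `^ alpha <= f s * derive1 (derive1 f) s)) ->
      (\int[(@lebesgue_measure R)]_(s in `[a, b])
          ((`|f s| `^ (- gamma^-1))%:E) <= C%:E)%E.
Proof.
move=> t12 g1 A0 al0 alg.
set r := (2 * gamma)^-1.
set bt := (alpha + 2) * r.
have g0 : 0 < gamma by lra.
have r0 : 0 < r by rewrite /r invr_gt0 mulr_gt0.
have bt0 : 0 <= bt by rewrite /bt mulr_ge0 ?ltW //; lra.
have bt1 : bt < 1.
  rewrite /bt /r ltr_pdivrMr ?mulr_gt0 //; lra.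
have bt01 : 0 <= bt < 1 by rewrite bt0 bt1.
set k := ((2 * A) `^ r)^-1 * (3^-1) `^ (- bt).
have k0 : 0 <= k by rewrite /k mulr_ge0 ?invr_ge0 ?powR_ge0.
set B := k / (1 - bt) * (theta2 - theta1) `^ (1 - bt).
have B0 : 0 <= B by rewrite /B mulr_ge0 ?divr_ge0 ?powR_ge0 // subr_ge0 ltW.
exists (B + B + 1); split; first lra.
move=> f a b [df [ddf cdd]] t1a ab bt2 Hor.
set f1 := derive1 f; set f2 := derive1 f1.
have Hf (x : R) : is_derive x 1 f (f1 x) by rewrite /f1 derive1E; exact: derivableP.
have Hf1 (x : R) : is_derive x 1 f1 (f2 x) by rewrite /f2 derive1E; exact: derivableP.
have [s0 /andP[as0 s0b] LB] : exists2 s0, a <= s0 <= b & forall s, a <= s <= b ->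
    2 * A * (`|s - s0| / 3) `^ alpha * (`|s - s0| / 3) * (`|s - s0| / 3) <= f s * f s.
  apply: (@lowerbound R f f1 f2 A alpha a b Hf Hf1 A0 al0 ab).
  - move=> x xab; case: Hor => H; apply: le_trans (H x xab);
      by rewrite mulr_ge0 ?powR_ge0 ?ltW.
  - move=> x l xab l0 lxa lbx; case: Hor => H; apply: le_trans (H x xab);
      rewrite ler_pM2l //; apply: ge0_ler_powR; rewrite ?nnegrE;
      move: xab => /andP[xa xb]; lra.
have cf : continuous f.
  by move=> x; apply: differentiable_continuous; apply/derivable1_diffP.
have mu_ : measurable_fun setT (fun s : R => `|f s| `^ (- gamma^-1)).
  apply: (measurableT_comp (measurable_powR _)).
  rewrite (_ : (fun s => `|f s|) = (@Num.norm _ R) \o f) //.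
  apply: measurableT_comp; first exact: normr_measurable.
  exact: continuous_measurable_fun.
have mh : measurable_fun setT (fun s : R => k * `|s - s0| `^ (- bt)).
  apply: measurable_funM; first exact: measurable_cst.
  apply: (measurableT_comp (measurable_powR _)).
  rewrite (_ : (fun s : R => `|s - s0|) = (@Num.norm _ R) \o (fun s : R => s - s0)) //.
  apply: measurableT_comp; first exact: normr_measurable.
  by apply: measurable_funB.
have muE : measurable_fun setT (EFin \o (fun s : R => `|f s| `^ (- gamma^-1))).
  exact/measurable_EFinP.
have mhE : measurable_fun setT (EFin \o (fun s : R => k * `|s - s0| `^ (- bt))).
  exact/measurable_EFinP.
have mD : measurable (`[a, b]%classic `\ s0).
  by apply: measurableD; [exact: measurable_itv|exact: measurable_set1].
have PW s : a <= s <= b -> s != s0 ->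
    `|f s| `^ (- gamma^-1) <= k * `|s - s0| `^ (- bt).
  move=> sab ss0.
  have y0 : 0 < `|s - s0| / 3 by rewrite divr_gt0 // normr_gt0 subr_eq0.
  have EE : `|f s| * `|f s| = f s * f s.
    by rewrite -normrM ger0_norm // -expr2 sqr_ge0.
  have := @pointwise R A alpha gamma `|f s| (`|s - s0| / 3) A0 al0 g0 y0 (normr_ge0 _).
  rewrite EE => /(_ (LB s sab)).
  rewrite [(`|s - s0| / 3) `^ _]powRM ?normr_ge0 ?invr_ge0 //.
  move=> H; apply: (le_trans H); rewrite /k le_eqVlt; apply/orP; left; apply/eqP.
  ring.
rewrite -(integral_setD1 (r := s0) mD); last exact: measurable_funS muE.
apply: (@le_trans _ _ (\int[@lebesgue_measure R]_(s in `[a, b]%classic `\ s0)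
   (k * `|s - s0| `^ (- bt))%:E)%E).
  apply: ge0_le_integral => //.
  - exact: measurable_funS muE.
  - exact: measurable_funS mhE.
  - move=> x [xab xs0]; rewrite lee_fin; apply: PW.
      by move: xab; rewrite /= in_itv.
    by apply/eqP.
have mL : measurable (`[a, s0[%classic : set R) by exact: measurable_itv.
have mR : measurable (`]s0, b]%classic : set R) by exact: measurable_itv.
apply: (@le_trans _ _ (\int[@lebesgue_measure R]_(s in `[a, s0[%classic `|` `]s0, b]%classic)
   (k * `|s - s0| `^ (- bt))%:E)%E).
  apply: ge0_subset_integral => //.
  - exact: measurableU.
  - exact: measurable_funS mhE.
  - by move=> x _; rewrite lee_fin mulr_ge0 ?powR_ge0.
  - move=> x [/= xab /eqP xs0]; move: xab; rewrite !in_itv /= => /andP[ax xb].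
    by case: (ltgtP x s0) xs0 => // h _; [left; rewrite /= ax|right; rewrite /= xb].
rewrite ge0_integral_setU //; last 3 first.
- exact: measurable_funS mhE.
- by move=> x _; rewrite lee_fin mulr_ge0 ?powR_ge0.
- apply/disj_setPS => x [/=]; rewrite !in_itv /= => /andP[_ h1] /andP[h2 _].
  by move: (lt_trans h1 h2); rewrite ltxx.
have pB y : 0 <= y <= theta2 - theta1 -> k / (1 - bt) * y `^ (1 - bt) <= B.
  move=> /andP[y0 y1]; rewrite /B; apply: ler_wpM2l.
    by rewrite divr_ge0 // subr_ge0 ltW.
  apply: ge0_ler_powR; rewrite ?nnegrE //; lra.
apply: (@le_trans _ _ (B%:E + B%:E)%E); last by rewrite -EFinD lee_fin; lra.
apply: leeD.
- rewrite (@eq_integral _ (measurableTypeR R) R _ `[a, s0[%classic (fun s : R => (k * (s0 - s) `^ (- bt))%:E)); last first.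
    move=> x; rewrite inE /= in_itv /= => /andP[_ xs0].
    by rewrite distrC ger0_norm // subr_ge0 ltW.
  apply: (le_trans (@left_int R k bt s0 a k0 bt01 as0)); rewrite lee_fin; apply: pB.
  apply/andP; split; lra.
- rewrite (@eq_integral _ (measurableTypeR R) R _ `]s0, b]%classic (fun s : R => (k * (s - s0) `^ (- bt))%:E)); last first.
    move=> x; rewrite inE /= in_itv /= => /andP[s0x _].
    by rewrite ger0_norm // subr_ge0 ltW.
  apply: (le_trans (@right_int R k bt s0 b k0 bt01 s0b)); rewrite lee_fin; apply: pB.
  apply/andP; split; lra.
Qed.
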